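(* Let $G$ be a graph with a length-function $\ell$ and let $T\subseteq G$ be a tree. If $T$ is $2$-geodesic in $G$, then $T$ is fully geodesic in $G$.
   Context: All graphs are finite; parallel edges are allowed, loops are not. A length-function on a graph $G$ is a map $\ell:E(G)\to\mathbb{R}^+$ (strictly positive reals); for a subgraph $H$ put $\ell(H)=\sum_{e\in E(H)}\ell(e)$, and subgraphs carry the restricted length-function. For $A\subseteq V(G)$, the Steiner distance $\mathrm{sd}_G(A)$ is the minimum of $\ell(S)$ over all connected subgraphs $S\subseteq G$ with $A\subseteq V(S)$ ($\infty$ if none exists). A subgraph $H\subseteq G$ is $k$-geodesic in $G$ if $\mathrm{sd}_H(A)=\mathrm{sd}_G(A)$ for every $A\subseteq V(H)$ with $|A|\le k$; it is fully geodesic in $G$ if it is $k$-geodesic for every $k\in\mathbb{N}$. *)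

(* Defs.v *)
From HB Require Import structures.
From mathcomp Require Import all_boot all_order all_algebra.
Set Implicit Arguments. Unset Strict Implicit. Unset Printing Implicit Defensive.
Import Order.TTheory GRing.Theory Num.Theory.
Local Open Scope ring_scope.

(* A finite multigraph G: vertex type V, edge type E (both finite); each edge
   e has two endpoints src e, tgt e (loops are excluded by a hypothesis
   src e != tgt e in the theorem). *)
Section Graphs.
Variables (V E : finType) (src tgt : E -> V).
Variable (R : realFieldType) (l : E -> R).

Definition sgraph := ({set V} * {set E})%type.

Definition joins (e : E) (x y : V) : bool :=
  ((src e == x) && (tgt e == y)) || ((src e == y) && (tgt e == x)).

Definition is_subgraph (S : sgraph) : bool :=
  [forall e in S.2, (src e \in S.1) && (tgt e \in S.1)].

Definition subg (S H : sgraph) : bool :=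
  [&& is_subgraph S, S.1 \subset H.1 & S.2 \subset H.2].

Definition adj (S : sgraph) : rel V := fun x y => [exists e in S.2, joins e x y].

Definition gconnected (S : sgraph) : bool :=
  [forall x in S.1, forall y in S.1, connect (adj S) x y].

(* a cycle in S: n >= 1 distinct edges f 0, ..., f (n-1) of S and n distinct
   vertices g 0, ..., g (n-1) such that f i joins g i and g (i+1 mod n). *)
Definition has_cycle (S : sgraph) : Prop :=
  exists n (f : 'I_n.+1 -> E) (g : 'I_n.+1 -> V),
    injective f /\ injective g /\
    forall i : 'I_n.+1, f i \in S.2 /\ joins (f i) (g i) (g (ordS i)).

Definition is_tree (T : sgraph) : Prop :=
  is_subgraph T /\ gconnected T /\ ~ has_cycle T.

Definition glen (S : sgraph) : R := \sum_(e in S.2) l e.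

Definition omin (x : R) (o : option R) : option R :=
  match o with None => Some x | Some y => Some (Num.min x y) end.

(* Steiner distance of A in H: minimum of glen S over connected subgraphs S
   of H containing A; None encodes infinity. *)
Definition sd (H : sgraph) (A : {set V}) : option R :=
  foldr omin None
    [seq glen X | X <- enum [pred X : sgraph | subg X H && gconnected X
                                              && (A \subset X.1)]].

Definition Gfull : sgraph := (setT, setT).

Definition k_geodesic (k : nat) (H : sgraph) : Prop :=
  forall A : {set V}, A \subset H.1 -> (#|A| <= k)%N -> sd H A = sd Gfull A.

Definition fully_geodesic (H : sgraph) : Prop := forall k, k_geodesic k H.

End Graphs.

(* Main.v *)
Require Import Defs.
From HB Require Import structures.
From mathcomp Require Import all_boot all_order all_algebra.
From mathcomp Require Import zify.
Import Order.TTheory GRing.Theory Num.Theory.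
Local Open Scope ring_scope.

Section Proof.
Variables (V E : finType) (src tgt : E -> V) (R : realFieldType) (l : E -> R).
Hypothesis lpos : forall e, 0 < l e.

Local Notation sg := (sgraph V E).
Local Notation jn := (joins src tgt).
Local Notation adjs := (adj src tgt).
Local Notation isg := (is_subgraph src tgt).
Local Notation sbg := (subg src tgt).
Local Notation gconn := (gconnected src tgt).
Local Notation gl := (glen l).

Lemma joinsC e x y : jn e x y = jn e y x.
Proof. by rewrite /joins orbC. Qed.

Lemma joinsE e x y : jn e x y ->
  (src e = x /\ tgt e = y) \/ (src e = y /\ tgt e = x).
Proof. by case/orP=> /andP[/eqP-> /eqP->]; [left|right]. Qed.

Lemma joins_st e : jn e (src e) (tgt e).
Proof. by rewrite /joins !eqxx. Qed.

Lemma adjC (S : sg) : symmetric (adjs S).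
Proof.
move=> x y; apply/existsP/existsP => -[e /andP[h1 h2]]; exists e;
  by rewrite h1 joinsC.
Qed.

Lemma connC (S : sg) x y : connect (adjs S) x y = connect (adjs S) y x.
Proof. exact: (sym_connect_sym (adjC S)). Qed.

Lemma adjI (S : sg) e x y : e \in S.2 -> jn e x y -> adjs S x y.
Proof. by move=> h1 h2; apply/existsP; exists e; rewrite h1. Qed.
Arguments adjI [S e x y].

Lemma adjP (S : sg) x y : adjs S x y -> exists2 e, e \in S.2 & jn e x y.
Proof. by case/existsP=> e /andP[h1 h2]; exists e. Qed.

Lemma conn_ind (r : rel V) (P : V -> Prop) a b :
  P a -> (forall z z', P z -> r z z' -> P z') -> connect r a b -> P b.
Proof.
move=> Pa step /connectP[p]; elim: p a Pa => [|z p IH] a Pa /=.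
  by move=> _ ->.
case/andP=> raz pz eb; apply: (IH z) => //; exact: step raz.
Qed.

Lemma conn_mono (S S' : sg) x y : S.2 \subset S'.2 ->
  connect (adjs S) x y -> connect (adjs S') x y.
Proof.
move=> sub; apply: connect_sub => u v /adjP[e eS je].
apply: connect1; exact: (adjI (subsetP sub e eS) je).
Qed.

Lemma isgP (S : sg) e : isg S -> e \in S.2 -> src e \in S.1 /\ tgt e \in S.1.
Proof. by move=> /forallP/(_ e)/implyP h /h/andP. Qed.
Arguments isgP [S e].

Lemma isgI (S : sg) : (forall e, e \in S.2 -> (src e \in S.1) && (tgt e \in S.1)) -> isg S.
Proof. by move=> h; apply/forallP=> e; apply/implyP; apply: h. Qed.

Lemma adj_in (S : sg) x y : isg S -> adjs S x y -> y \in S.1.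
Proof. by move=> iS /adjP[e eS /joinsE[[_ <-]|[<- _]]]; case: (isgP iS eS). Qed.

Lemma conn_in (S : sg) x y : isg S -> x \in S.1 -> connect (adjs S) x y -> y \in S.1.
Proof.
move=> iS xS; apply: (@conn_ind (adjs S) (fun z => z \in S.1) x y xS) => z z' _.
exact: adj_in.
Qed.

Lemma gconnE (S : sg) x y : gconn S -> x \in S.1 -> y \in S.1 -> connect (adjs S) x y.
Proof.
by move=> /forallP/(_ x)/implyP h /h/forallP/(_ y)/implyP.
Qed.

Arguments gconnE [S x y].

Lemma gconnI (S : sg) : (forall x y, x \in S.1 -> y \in S.1 -> connect (adjs S) x y) -> gconn S.
Proof.
move=> h; apply/forallP=> x; apply/implyP=> hx; apply/forallP=> y; apply/implyP=> hy.
exact: h.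
Qed.

Lemma sbg_trans (X Y Z : sg) : sbg X Y -> sbg Y Z -> sbg X Z.
Proof.
case/and3P=> iX s1 s2 /and3P[_ t1 t2]; apply/and3P; split => //.
  exact: subset_trans s1 t1.
exact: subset_trans s2 t2.
Qed.

Lemma sbgP (X Y : sg) : sbg X Y -> [/\ isg X, X.1 \subset Y.1 & X.2 \subset Y.2].
Proof. by case/and3P. Qed.
Arguments sbgP [X Y].

Definition dele (S : sg) e : sg := (S.1, S.2 :\ e).
Definition comp (S : sg) a : sg :=
  ([set z | connect (adjs S) a z], [set f in S.2 | connect (adjs S) a (src f)]).
Definition sunion (X Y : sg) : sg := (X.1 :|: Y.1, X.2 :|: Y.2).
Definition eg e : sg := ([set src e; tgt e], [set e]).

Lemma dele_sbg S e : isg S -> sbg (dele S e) S.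
Proof.
move=> iS; apply/and3P; split => //=; last exact: subD1set.
by apply: isgI => f /setD1P[_ fS]; apply/andP; apply: isgP fS.
Qed.

Lemma comp_isg S a : isg (comp S a).
Proof.
apply: isgI => f; rewrite !inE => /andP[fS ca]; rewrite ca /=.
apply: connect_trans ca (connect1 _); exact: (adjI fS (joins_st f)).
Qed.

Lemma comp_sbg S a : isg S -> a \in S.1 -> sbg (comp S a) S.
Proof.
move=> iS aS; apply/and3P; split; first exact: comp_isg.
  by apply/subsetP=> z; rewrite inE; apply: conn_in.
by apply/subsetP=> f; rewrite inE => /andP[].
Qed.

Lemma comp_mem S a : a \in (comp S a).1.
Proof. by rewrite inE connect0. Qed.

Lemma comp_reach S a z : connect (adjs S) a z -> connect (adjs (comp S a)) a z.
Proof.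
move=> h.
suff: connect (adjs S) a z && connect (adjs (comp S a)) a z by case/andP.
apply: (@conn_ind (adjs S) (fun z => connect (adjs S) a z && connect (adjs (comp S a)) a z) a z _ _ h); first by rewrite !connect0.
move=> u u' /andP[cu cc] auu'; have cu' := connect_trans cu (connect1 auu').
rewrite cu' /=; apply: connect_trans cc (connect1 _).
case/adjP: auu' => f fS jf; apply: (@adjI _ f) => //; rewrite inE fS /=.
by case/joinsE: jf => -[-> _].
Qed.

Lemma comp_conn S a : gconn (comp S a).
Proof.
apply: gconnI => x y; rewrite !inE => /comp_reach hx /comp_reach hy.
by apply: connect_trans hy; rewrite connC.
Qed.

Lemma L_split S e a b x : isg S -> gconn S -> e \in S.2 -> jn e a b -> x \in S.1 ->
  connect (adjs (dele S e)) a x || connect (adjs (dele S e)) b x.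
Proof.
move=> iS cS eS jab xS.
have [sS tS] := isgP iS eS.
suff: connect (adjs (dele S e)) (src e) x || connect (adjs (dele S e)) (tgt e) x.
  by case/joinsE: jab => -[-> ->] //; rewrite orbC.
apply: (@conn_ind (adjs S) (fun z => is_true (connect (adjs (dele S e)) (src e) z || connect (adjs (dele S e)) (tgt e) z)) _ _ _ _ (gconnE cS sS xS)); first by rewrite connect0.
move=> z z' hz /adjP[f fS jf].
have [fe|fe] := eqVneq f e.
  by rewrite fe in jf; case/joinsE: jf => [[_ <-]|[<- _]]; rewrite connect0 ?orbT.
have az : adjs (dele S e) z z' by apply: (@adjI _ f) => //; rewrite !inE fe.
by case/orP: hz => h; rewrite (connect_trans h (connect1 az)) ?orbT.
Qed.

Lemma sunion_sbg X Y H : sbg X H -> sbg Y H -> sbg (sunion X Y) H.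
Proof.
move=> /and3P[iX x1 x2] /and3P[iY y1 y2]; apply/and3P; split => /=;
  try by rewrite subUset; apply/andP.
apply: isgI => f; rewrite !inE => /orP[] fs.
  by have [-> ->] := isgP iX fs.
by have [-> ->] := isgP iY fs; rewrite !orbT.
Qed.

Lemma sunion_conn X Y z : gconn X -> gconn Y -> z \in X.1 -> z \in Y.1 ->
  gconn (sunion X Y).
Proof.
move=> cX cY zX zY.
have hz : forall x, x \in (sunion X Y).1 -> connect (adjs (sunion X Y)) z x.
  move=> x; rewrite inE => /orP[] hx.
    by apply: conn_mono (gconnE cX zX hx); apply: subsetUl.
  by apply: conn_mono (gconnE cY zY hx); apply: subsetUr.
apply: gconnI => x y /hz hx /hz hy; apply: connect_trans hy; by rewrite connC.
Qed.

Arguments sunion_conn [X Y z].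
Arguments sunion_sbg [X Y H].

Lemma eg_pc S e a b : isg S -> e \in S.2 -> jn e a b ->
  [/\ sbg (eg e) S, gconn (eg e), a \in (eg e).1 & b \in (eg e).1].
Proof.
move=> iS eS jab; have [sS tS] := isgP iS eS.
have ae : adjs (eg e) (src e) (tgt e) by apply: (@adjI _ e); rewrite ?inE ?joins_st.
split.
- apply/and3P; split.
  + by apply: isgI => f; rewrite inE => /eqP->; rewrite !inE !eqxx orbT.
  + by apply/subsetP=> z; rewrite !inE => /orP[]/eqP->.
  + by rewrite sub1set.
- apply: gconnI => x y; rewrite !inE => /orP[]/eqP-> /orP[]/eqP->;
    rewrite ?connect0 ?(connect1 ae) //; rewrite connC; exact: connect1.
- by case/joinsE: jab => [[<- _]|[_ <-]]; rewrite !inE eqxx ?orbT.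
- by case/joinsE: jab => [[_ <-]|[<- _]]; rewrite !inE eqxx ?orbT.
Qed.


Lemma comp1E S a z : (z \in (comp S a).1) = connect (adjs S) a z.
Proof. by rewrite inE. Qed.
Lemma comp2E S a f : (f \in (comp S a).2) = (f \in S.2) && connect (adjs S) a (src f).
Proof. by rewrite inE. Qed.

Arguments eg_pc [S e a b].
Arguments L_split [S e a b x].

Definition pc (H : sg) (Y : sg) (u v : V) : Prop :=
  [/\ sbg Y H, gconn Y, u \in Y.1 & v \in Y.1].

Fixpoint walk (P : sg -> V -> V -> Prop) (x : V) (w : seq (sg * V)) : Prop :=
  match w with [::] => True | p :: w' => P p.1 x p.2 /\ walk P p.2 w' end.

Definition lastw x (w : seq (sg * V)) := last x (map snd w).
Definition cnt e (w : seq (sg * V)) := count (fun p : sg * V => e \in p.1.2) w.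

Lemma cnt_cat e w1 w2 : cnt e (w1 ++ w2) = (cnt e w1 + cnt e w2)%N.
Proof. exact: count_cat. Qed.
Lemma cnt_cons e p w : cnt e (p :: w) = ((e \in p.1.2) + cnt e w)%N.
Proof. by []. Qed.
Lemma cnt_nil e : cnt e [::] = 0%N.
Proof. by []. Qed.

Lemma walk_cat P x w1 w2 : walk P x (w1 ++ w2) <-> walk P x w1 /\ walk P (lastw x w1) w2.
Proof.
elim: w1 x => [|p w1 IH] x /=; first by split=> // -[].
split=> [[hp /IH[h1 h2]]|[[hp h1] h2]]; first by do !split.
by split=> //; apply/IH; split.
Qed.

Lemma lastw_cat x w1 w2 : lastw x (w1 ++ w2) = lastw (lastw x w1) w2.
Proof. by rewrite /lastw map_cat last_cat. Qed.

Lemma walk_mono (P Q : sg -> V -> V -> Prop) x w :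
  (forall Y u v, P Y u v -> Q Y u v) -> walk P x w -> walk Q x w.
Proof.
move=> h; elim: w x => [|p w IH] x //= [hp hw]; split; [exact: h | exact: IH].
Qed.

Lemma cnt0 H x w e : walk (pc H) x w -> e \notin H.2 -> cnt e w = 0%N.
Proof.
elim: w x => [|[Y y] w IH] x //= [[sY _ _ _] hw] eH.
move: (IH y hw eH); rewrite /cnt /= => ->; rewrite addn0.
case: (sbgP sY) => _ _ s2; apply/eqP; rewrite eqb0; apply: contra eH; exact: (subsetP s2).
Qed.
Arguments cnt0 [H x w e].

Lemma gwalk_noinc S r : gconn S -> r \in S.1 ->
  (forall e, e \in S.2 -> (src e != r) && (tgt e != r)) ->
  {subset S.1 <= [:: r]}.
Proof.
move=> cS rS h x xS.
have : x == r.
  apply: (@conn_ind (adjs S) (fun z => is_true (z == r)) r x (eqxx r) _ (gconnE cS rS xS)).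
  move=> z z' /eqP-> /adjP[f fS jf]; have /andP[h1 h2] := h f fS.
  case/joinsE: jf => [[hs _]|[_ ht]]; [by rewrite hs eqxx in h1 | by rewrite ht eqxx in h2].
by rewrite inE.
Qed.

Lemma gwalk n (S : sg) r : (#|S.2| <= n)%N -> isg S -> gconn S -> r \in S.1 ->
  exists w, [/\ walk (pc S) r w, lastw r w = r,
    {subset S.1 <= r :: map snd w} & forall e, (cnt e w <= 2)%N].
Proof.
elim: n S r => [|n IH] S r cardS iS cS rS.
  have h : {subset S.1 <= [:: r]}.
    apply: gwalk_noinc => // e eS; move: cardS; rewrite leqn0 => /eqP/cards0_eq S0.
    by rewrite S0 inE in eS.
  by exists [::]; split => //; move=> e; rewrite /cnt.
case: (pickP [pred e | (e \in S.2) && ((src e == r) || (tgt e == r))]) =>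
   [e /andP[eS er] | none]; last first.
  have h : {subset S.1 <= [:: r]}.
    apply: gwalk_noinc => // e eS; move: (none e) => /=; rewrite eS /=.
    by move/negbT; rewrite negb_or.
  by exists [::]; split => //; move=> e; rewrite /cnt.
pose v := if src e == r then tgt e else src e.
have jrv : jn e r v.
  rewrite /v; case: ifP => [/eqP hs|hs]; first by rewrite /joins hs !eqxx.
  by move: er; rewrite hs /= => /eqP ht; rewrite /joins ht !eqxx orbT.
have [sS tS] := isgP iS eS.
have vS : v \in S.1 by rewrite /v; case: ifP.
set H := dele S e.
have sH : sbg H S := dele_sbg _ e iS.
have iH : isg H by case/sbgP: sH.
have cardH : forall a, (#|(comp H a).2| <= n)%N.
  move=> a; have := cardsD1 e S.2; rewrite eS add1n => cE.
  apply: leq_trans (_ : #|S.2 :\ e| <= n)%N.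
    by apply: subset_leq_card; apply/subsetP => f; rewrite comp2E => /andP[].
  by move: cardS; rewrite cE ltnS.
have split_x : forall x, x \in S.1 -> connect (adjs H) r x || connect (adjs H) v x.
  by move=> x xS; apply: L_split.
have walkC : forall a w, a \in S.1 -> walk (pc (comp H a)) a w -> walk (pc S) a w.
  move=> a w aS; apply: walk_mono => Y u u' [sY cY uY u'Y]; split => //.
  apply: sbg_trans sY _; apply: sbg_trans sH; exact: comp_sbg.
have [w [wW wL wC wN]] :=
  IH (comp H r) r (cardH r) (comp_isg _ _) (comp_conn _ _) (comp_mem _ _).
case hv: (connect (adjs H) r v).
  exists w; split => //; first exact: walkC.
  move=> x xS; apply: wC; rewrite comp1E.
  by case/orP: (split_x x xS) => // h; apply: connect_trans hv h.
have [w' [wW' wL' wC' wN']] :=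
  IH (comp H v) v (cardH v) (comp_isg _ _) (comp_conn _ _) (comp_mem _ _).
have [pe1 pe2 pe3 pe4] := eg_pc iS eS jrv.
exists (w ++ (eg e, v) :: (w' ++ [:: (eg e, r)])); split.
- apply/walk_cat; split; first exact: walkC.
  rewrite wL /=; split; first by split.
  apply/walk_cat; split; first exact: walkC.
  by rewrite wL' /=; split => //; split.
- by rewrite lastw_cat wL /lastw /= map_cat last_cat /=.
- move=> x xS; case/orP: (split_x x xS) => h.
    have := wC x; rewrite comp1E h => /(_ isT); rewrite inE => /orP[/eqP->|hx]; first by rewrite inE eqxx.
    by rewrite inE map_cat mem_cat hx orbT.
  have := wC' x; rewrite comp1E h => /(_ isT); rewrite inE => /orP[/eqP->|hx].
    by rewrite inE map_cat mem_cat /= inE eqxx !orbT.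
  by rewrite inE map_cat mem_cat /= inE map_cat mem_cat hx !orbT.
- move=> f; rewrite cnt_cat cnt_cons cnt_cat cnt_cons cnt_nil /=.
  have [->|fe] := eqVneq f e.
    rewrite (cnt0 wW) ?(cnt0 wW') ?inE ?eqxx //; rewrite comp2E /H /dele /= !inE eqxx.
  rewrite !inE (negbTE fe) /= !add0n !addn0.
  case: (boolP (f \in (comp H r).2)) => fr; last by rewrite (cnt0 wW fr) add0n; apply: wN'.
  have fv : f \notin (comp H v).2.
    apply/negP; rewrite comp2E => /andP[_ cv]; move: fr; rewrite comp2E => /andP[_ cr].
    have : connect (adjs H) r v by apply: connect_trans cr _; rewrite connC.
    by rewrite hv.
  by rewrite (cnt0 wW' fv) addn0; apply: wN.
Qed.


Lemma walk_filter (H : sg) (A : {set V}) n x w : (size w <= n)%N ->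
  walk (pc H) x w -> lastw x w \in A ->
  exists w', [/\ walk (pc H) x w', all (fun p : sg * V => p.2 \in A) w',
    lastw x w' = lastw x w,
    (forall a, a \in A -> a \in map snd w -> a \in x :: map snd w') &
    forall e, (cnt e w' <= cnt e w)%N].
Proof.
elim: n x w => [|n IH] x w.
  by rewrite leqn0 => /nilP-> _ _; exists [::]; split.
case: w => [|[Y y] w].
  by move=> _ _ _; exists [::]; split.
rewrite /= ltnS => sw [[sY cY xY yY] hw] hl.
case yA: (y \in A).
  have [w' [h1 h2 h3 h4 h5]] := IH y w sw hw hl.
  exists ((Y, y) :: w'); split => //.
  - by rewrite /= yA h2.
  - move=> a aA; rewrite inE => /orP[/eqP->|aw]; first by rewrite !inE eqxx orbT.
    by rewrite inE (h4 a aA aw) orbT.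
  - by move=> e; rewrite !cnt_cons leq_add2l.
case: w sw hw hl => [|[Y' y'] w] sw hw hl.
  by rewrite /lastw /= in hl; rewrite hl in yA.
case: hw => [[sY' cY' yY' y'Y'] hw].
have pu : pc H (sunion Y Y') x y'.
  split; [exact: sunion_sbg | exact: sunion_conn cY cY' yY yY' |
    by rewrite inE xY | by rewrite inE y'Y' orbT].
have [w' [h1 h2 h3 h4 h5]] := IH x ((sunion Y Y', y') :: w) sw (conj pu hw) hl.
exists w'; split => //.
- move=> a aA; rewrite inE => /orP[/eqP ay|aw]; first by rewrite -ay aA in yA.
  exact: h4.
- move=> e; apply: leq_trans (h5 e) _; rewrite !cnt_cons addnA leq_add2r /= inE.
  by case: (e \in Y.2); case: (e \in Y'.2).
Qed.

Definition cand (H : sg) (A : {set V}) (X : sg) : bool :=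
  sbg X H && gconn X && (A \subset X.1).

Lemma candI (H : sg) (A : {set V}) (X : sg) : sbg X H -> gconn X -> A \subset X.1 -> cand H A X.
Proof. by rewrite /cand => -> -> ->. Qed.
Lemma candE (H : sg) (A : {set V}) (X : sg) : cand H A X -> [/\ sbg X H, gconn X & A \subset X.1].
Proof. by case/andP=> /andP[-> ->] ->. Qed.

Lemma foldr_omin (s : seq R) : s != [::] ->
  exists m, [/\ foldr (@omin R) None s = Some m, m \in s & forall y, y \in s -> m <= y].
Proof.
elim: s => [|x s IH] // _ /=.
case: (eqVneq s [::]) => [->|sn].
  by exists x; split; rewrite ?inE ?eqxx // => y; rewrite inE => /eqP->.
have [m [-> ms mle]] := IH sn; rewrite /=.
exists (Num.min x m); split => //.
- by rewrite minEle inE; case: ifP; rewrite ?eqxx ?ms ?orbT.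
- move=> y; rewrite inE ge_min => /orP[/eqP->|ys]; first by rewrite lexx.
  by rewrite mle ?orbT.
Qed.

Lemma sd_spec H A : (exists X, cand H A X) ->
  exists m, [/\ sd src tgt l H A = Some m, exists2 X, cand H A X & gl X = m
             & forall X, cand H A X -> m <= gl X].
Proof.
case=> X0 hX0.
have hin : forall X, cand H A X ->
   gl X \in [seq gl X | X <- enum [pred X : sg | sbg X H && gconn X && (A \subset X.1)]].
  by move=> X hX; apply: map_f; rewrite mem_enum.
have sn : [seq gl X | X <- enum [pred X : sg | sbg X H && gconn X && (A \subset X.1)]] != [::].
  by apply/eqP => hnil; move: (hin X0 hX0); rewrite hnil.
have [m [e1 ms mle]] := foldr_omin _ sn.
exists m; split => //.
- case/mapP: ms => X; rewrite mem_enum => hX ->; by exists X.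
- by move=> X hX; apply: mle; apply: hin.
Qed.

Lemma nthI (q : seq V) t i j : uniq (t :: q) -> (i <= size q)%N -> (j <= size q)%N ->
  nth t (t :: q) i = nth t (t :: q) j -> i = j.
Proof.
by move=> uq iq jq /eqP; rewrite nth_uniq //= ?ltnS // => /eqP.
Qed.


Variable T : sg.
Hypothesis iT : isg T.
Hypothesis cT : gconn T.
Hypothesis acyc : ~ has_cycle src tgt T.

Lemma TP e : e \in T.2 -> ~~ connect (adjs (dele T e)) (tgt e) (src e).
Proof.
move=> eT; apply/negP => /connectP[p pp lp].
move: lp; case: (shortenP pp) => q pq uq _ lq.
apply: acyc.
pose k := size q.
pose vs := tgt e :: q.
pose pe x y := odflt e [pick f in (dele T e).2 | jn f x y].
have peP : forall i, (i < k)%N ->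
    pe (nth (tgt e) vs i) (nth (tgt e) vs i.+1) \in (dele T e).2 /\
    jn (pe (nth (tgt e) vs i) (nth (tgt e) vs i.+1)) (nth (tgt e) vs i) (nth (tgt e) vs i.+1).
  move=> i ik; have /adjP[f0 f0H jf0] := (pathP (tgt e) pq) i ik.
  rewrite /pe; case: pickP => [f1 /andP[h1 h2] | none] //=.
  by have := none f0; rewrite f0H jf0.
have ninj : forall i j, (i <= k)%N -> (j <= k)%N -> nth (tgt e) vs i = nth (tgt e) vs j -> i = j.
  by move=> i j; apply: nthI.
have peT : forall i, (i < k)%N -> pe (nth (tgt e) vs i) (nth (tgt e) vs i.+1) != e.
  by move=> i /peP[]; rewrite !inE => /andP[].
exists k, (fun i : 'I_k.+1 => if (i < k)%N then pe (nth (tgt e) vs i) (nth (tgt e) vs i.+1) else e),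
  (fun i : 'I_k.+1 => nth (tgt e) vs i).
split; [|split].
- move=> i j /=.
  case: ltnP => ik; case: ltnP => jk.
  + move=> fij; apply: val_inj => /=.
    have [_ ji] := peP i ik; have [_ jj] := peP j jk; rewrite fij in ji.
    have ik' := ltnW ik; have jk' := ltnW jk.
    case/joinsE: ji => [[a1 a2]|[a1 a2]]; case/joinsE: jj => [[b1 b2]|[b1 b2]].
    * by apply: ninj => //; exact: (etrans (esym a1) b1).
    * have e1 : nth (tgt e) vs i = nth (tgt e) vs j.+1 by exact: (etrans (esym a1) b1).
      have e2 : nth (tgt e) vs i.+1 = nth (tgt e) vs j by exact: (etrans (esym a2) b2).
      have := ninj _ _ ik' jk e1; have := ninj _ _ ik jk' e2; lia.
    * have e1 : nth (tgt e) vs i.+1 = nth (tgt e) vs j by exact: (etrans (esym a1) b1).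
      have e2 : nth (tgt e) vs i = nth (tgt e) vs j.+1 by exact: (etrans (esym a2) b2).
      have := ninj _ _ ik' jk e2; have := ninj _ _ ik jk' e1; lia.
    * by apply: ninj => //; exact: (etrans (esym a2) b2).
  + by move=> fij; exfalso; move/eqP: (peT i ik); apply; exact: fij.
  + by move=> fij; exfalso; move/eqP: (peT j jk); apply; symmetry; exact: fij.
  + move=> _; apply: val_inj => /=; have := ltn_ord i; have := ltn_ord j; lia.
- move=> i j /= /ninj; move=> h; apply: val_inj; apply: h.
  + by have := ltn_ord i; rewrite ltnS.
  + by have := ltn_ord j; rewrite ltnS.
- move=> i /=; case: ltnP => ik.
  + have [h1 h2] := peP i ik; split; first by move: h1; rewrite !inE => /andP[].
    by rewrite modn_small ?ltnS //; exact: h2.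
  + have ik' : (i : nat) = k by have := ltn_ord i; lia.
    split => //.
    rewrite ik' modnn.
    have -> : nth (tgt e) vs k = src e by rewrite /vs -last_nth lq.
    exact: joins_st.
Qed.


Lemma glenE (X : sg) : gl X = \sum_e (e \in X.2)%:R * l e.
Proof.
rewrite /glen big_mkcond; apply: eq_bigr => e _.
by case: (e \in X.2); rewrite ?mul1r ?mul0r.
Qed.

Lemma glen_ge0 (X : sg) : 0 <= gl X.
Proof. by rewrite /glen; apply: sumr_ge0 => e _; apply: ltW. Qed.

Lemma glen_mono (X Y : sg) : X.2 \subset Y.2 -> gl X <= gl Y.
Proof.
move=> sub; rewrite !glenE; apply: ler_sum => e _.
apply: ler_wpM2r; first exact: ltW.
case eX: (e \in X.2); last by rewrite ler0n.
by rewrite (subsetP sub e eX).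
Qed.

Lemma glen_strict (X Y : sg) e : e \in X.2 -> Y.2 \subset X.2 :\ e -> gl Y < gl X.
Proof.
move=> eX sub.
have -> : gl X = l e + gl (dele X e) by rewrite /glen (big_setD1 _ eX).
rewrite -subr_gt0 -addrA; apply: ltr_pwDl => //.
by rewrite subr_ge0; apply: glen_mono.
Qed.

Lemma min_sep (X : sg) u v : sbg X T -> gconn X -> u \in X.1 -> v \in X.1 ->
  (forall X', sbg X' T -> gconn X' -> u \in X'.1 -> v \in X'.1 -> gl X <= gl X') ->
  forall e, e \in X.2 -> ~~ connect (adjs (dele T e)) u v.
Proof.
move=> sX cX uX vX mn e eX; apply/negP => cuv.
have [iX s1 s2] := sbgP sX.
have eT : e \in T.2 := subsetP s2 e eX.
have [sXe tXe] := isgP iX eX.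
have sXm : sbg (dele X e) X := dele_sbg _ e iX.
have [iXm _ _] := sbgP sXm.
have key : forall w, w \in X.1 -> connect (adjs (dele X e)) w u ->
    connect (adjs (dele X e)) w v -> False.
  move=> w wX cu cv.
  have lt : gl (comp (dele X e) w) < gl X.
    apply: (@glen_strict _ _ e) => //.
    by apply/subsetP => f; rewrite comp2E => /andP[].
  have : gl X <= gl (comp (dele X e) w).
    apply: mn; rewrite ?comp1E ?comp_conn //.
    apply: (@sbg_trans _ (dele X e)); first exact: comp_sbg.
    exact: (@sbg_trans _ X).
  by rewrite leNgt lt.
have mTm : forall a b, connect (adjs (dele X e)) a b -> connect (adjs (dele T e)) a b.
  by move=> a b; apply: conn_mono; apply: setSD.
have hu := L_split iX cX eX (joins_st e) uX.
have hv := L_split iX cX eX (joins_st e) vX.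
have tp := TP _ eT.
case/orP: hu => hu; case/orP: hv => hv.
- exact: (key _ sXe hu hv).
- move/negP: tp; apply; apply: connect_trans (mTm _ _ hv) _; rewrite connC.
  exact: connect_trans (mTm _ _ hu) cuv.
- move/negP: tp; apply; apply: connect_trans (mTm _ _ hu) _.
  by apply: connect_trans cuv _; rewrite connC; apply: mTm.
- exact: (key _ tXe hu hv).
Qed.

Hypothesis H2 : k_geodesic src tgt l 2 T.

Definition pcT (X : sg) u v : Prop :=
  pc T X u v /\ (forall e, e \in X.2 -> ~~ connect (adjs (dele T e)) u v).

Lemma sbgT X : isg X -> sbg X (Gfull V E).
Proof. by move=> iX; apply/and3P; split => //; apply: subsetT. Qed.

Lemma pair_T (Y : sg) x y : isg Y -> gconn Y -> x \in Y.1 -> y \in Y.1 ->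
  x \in T.1 -> y \in T.1 -> exists X, pcT X x y /\ gl X <= gl Y.
Proof.
move=> iY cY xY yY xT yT.
have AT : [set x; y] \subset T.1 by rewrite subUset !sub1set xT yT.
have Acard : (#|[set x; y]| <= 2)%N by rewrite cards2; case: (x != y).
have hsd := H2 _ AT Acard.
have [m [e1 [X hX gX] mle]] : exists m, [/\ sd src tgt l T [set x; y] = Some m,
    exists2 X, cand T [set x; y] X & gl X = m
    & forall X, cand T [set x; y] X -> m <= gl X].
  apply: sd_spec; exists T; apply: candI => //.
  by apply/and3P; split => //; apply: subxx.
have [m' [e2 _ mle']] : exists m, [/\ sd src tgt l (Gfull V E) [set x; y] = Some m,
    exists2 X, cand (Gfull V E) [set x; y] X & gl X = m
    & forall X, cand (Gfull V E) [set x; y] X -> m <= gl X].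
  apply: sd_spec; exists Y; apply: candI => //; first exact: sbgT.
  by rewrite subUset !sub1set xY yY.
have mm : m = m' by move: hsd; rewrite e1 e2 => -[].
case/candE: hX => sX cX AX.
have xX : x \in X.1 by apply: (subsetP AX); rewrite !inE eqxx.
have yX : y \in X.1 by apply: (subsetP AX); rewrite !inE eqxx orbT.
exists X; split.
  split; first by split.
  apply: min_sep => // X' sX' cX' xX' yX'; rewrite gX; apply: mle.
  by apply: candI => //; rewrite subUset !sub1set xX' yX'.
rewrite gX mm; apply: mle'; apply: candI => //; first exact: sbgT.
by rewrite subUset !sub1set xY yY.
Qed.


Lemma to_T (H : sg) x w : x \in T.1 -> all (fun p : sg * V => p.2 \in T.1) w ->
  walk (pc H) x w ->
  exists wT, [/\ walk pcT x wT, map snd wT = map snd w &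
     \sum_(p <- wT) gl p.1 <= \sum_(p <- w) gl p.1].
Proof.
elim: w x => [|[Y y] w IH] x xT /=.
  by move=> _ _; exists [::]; split.
case/andP=> yT aw [[sY cY xY yY] hw].
have [iY _ _] := sbgP sY.
have [X [pX gX]] := pair_T _ _ _ iY cY xY yY xT yT.
have [wT [h1 h2 h3]] := IH y yT aw hw.
exists ((X, y) :: wT); split => //=; first by rewrite h2.
by rewrite !big_cons /=; apply: lerD.
Qed.

Fixpoint wunion x (w : seq (sg * V)) : sg :=
  if w is p :: w' then sunion p.1 (wunion p.2 w') else ([set x], set0).

Lemma wunion_ok x w : walk pcT x w -> x \in T.1 ->
  [/\ sbg (wunion x w) T, gconn (wunion x w), x \in (wunion x w).1 &
      {subset map snd w <= (wunion x w).1}].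
Proof.
elim: w x => [|[Y y] w IH] x /=.
  move=> _ xT; split => //.
  - apply/and3P; split => /=; last exact: sub0set.
      by apply: isgI => f; rewrite inE.
    by rewrite sub1set.
  - by apply: gconnI => a b; rewrite !inE => /eqP-> /eqP->; apply: connect0.
  - by rewrite inE.
case=> [[[sY cY xY yY] _] hw] xT.
have [_ s1 _] := sbgP sY.
have yT : y \in T.1 := subsetP s1 y yY.
have [u1 u2 u3 u4] := IH y hw yT.
split.
- exact: sunion_sbg.
- exact: sunion_conn cY u2 yY u3.
- by rewrite inE xY.
- move=> z; rewrite inE => /orP[/eqP->|zw]; first by rewrite inE yY.
  by rewrite inE u4 ?orbT.
Qed.

Fixpoint chg (f : V -> bool) x (w : seq (sg * V)) : nat :=
  if w is p :: w' then ((f x != f p.2) + chg f p.2 w')%N else 0%N.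

Lemma chg_odd f x w : odd (chg f x w) = (f x != f (lastw x w)).
Proof.
elim: w x => [|[Y y] w IH] x /=; first by rewrite /lastw /= eqxx.
rewrite oddD IH /lastw /=.
by case: (f x); case: (f y); case: (f (last y [seq i.2 | i <- w])).
Qed.

Lemma chg_le f x w e : walk pcT x w ->
  (forall Y u v, pcT Y u v -> e \notin Y.2 -> f u = f v) -> (chg f x w <= cnt e w)%N.
Proof.
move=> hw hf; elim: w x hw => [|[Y y] w IH] x; first by [].
case=> pY hw; rewrite cnt_cons; apply: leq_add; last exact: IH.
case eY: (e \in Y.2) => /=; first exact: leq_b1.
by rewrite (hf Y x y pY) ?eqxx ?eY.
Qed.

Lemma chg_pos f x w e : walk pcT x w ->
  (forall Y u v, pcT Y u v -> e \in Y.2 -> f u != f v) ->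
  e \in (wunion x w).2 -> (0 < chg f x w)%N.
Proof.
move=> hw hf; elim: w x hw => [|[Y y] w IH] x /=; first by rewrite inE.
case=> pY hw; rewrite inE => /orP[eY|ew].
  by rewrite (hf Y x y pY eY).
by apply: leq_trans (IH y hw ew) _; apply: leq_addl.
Qed.

Lemma sum_glen (w : seq (sg * V)) :
  \sum_(p <- w) gl p.1 = \sum_e (cnt e w)%:R * l e.
Proof.
elim: w => [|p w IH].
  by rewrite big_nil; apply/esym; apply: big1 => e _; rewrite mul0r.
rewrite big_cons IH glenE -big_split; apply: eq_bigr => e _.
by rewrite cnt_cons natrD mulrDl.
Qed.

Lemma main (S : sg) (A : {set V}) : A \subset T.1 -> cand (Gfull V E) A S ->
  exists U, cand T A U /\ gl U <= gl S.
Proof.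
move=> AT /candE[sS cS AS].
have [iS _ _] := sbgP sS.
case: (set_0Vmem A) => [A0|[r rA]].
  exists ([set: V] :&: set0, set0); split; last first.
    by rewrite /glen big_set0; apply: glen_ge0.
  apply: candI; rewrite ?A0 ?sub0set //.
  - apply/and3P; split => /=; last exact: sub0set.
      by apply: isgI => f; rewrite inE.
    by rewrite setI0 sub0set.
  - by apply: gconnI => a b; rewrite /= setI0 inE.
have rS : r \in S.1 := subsetP AS r rA.
have [w [wW wL wC wN]] := gwalk _ _ _ (leqnn _) iS cS rS.
have [w1 [w1W w1A w1L w1C w1N]] := @walk_filter S A (size w) r w (leqnn _) wW (ltac:(by rewrite wL)).
have rT : r \in T.1 := subsetP AT r rA.
have w1T : all (fun p : sg * V => p.2 \in T.1) w1.
  by apply/allP => p pw; apply: (subsetP AT); move/allP: w1A; apply.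
have [wT [wTW wTm wTs]] := to_T _ _ _ rT w1T w1W.
have [u1 u2 u3 u4] := wunion_ok _ _ wTW rT.
have AU : forall a, a \in A -> a \in (wunion r wT).1.
  move=> a aA.
  have : a \in r :: map snd w1.
    have := wC a (subsetP AS a aA); rewrite inE => /orP[/eqP->|aw].
      by rewrite inE eqxx.
    exact: w1C.
  by rewrite inE -wTm => /orP[/eqP->|]//; apply: u4.
exists (wunion r wT); split.
  by apply: candI => //; apply/subsetP.
have lastT : lastw r wT = r by rewrite /lastw wTm -/(lastw r w1) w1L wL.
have b1 : 2 * gl (wunion r wT) <= \sum_(p <- wT) gl p.1.
  rewrite sum_glen glenE mulr_sumr; apply: ler_sum => e _.
  rewrite mulrA -natrM; apply: ler_wpM2r; first exact: ltW.
  rewrite ler_nat.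
  case eU: (e \in (wunion r wT).2) => //=.
  have [_ _ s2] := sbgP u1.
  have eT : e \in T.2 := subsetP s2 e eU.
  pose f z := connect (adjs (dele T e)) (src e) z.
  have hpos : (0 < chg f r wT)%N.
    apply: (chg_pos _ _ _ _ wTW _ eU) => Y u v [[sY _ uY vY] sep] eY.
    have [_ t1 _] := sbgP sY.
    have uT := subsetP t1 u uY; have vT := subsetP t1 v vY.
    apply/negP => /eqP fuv; move/negP: (sep e eY); apply.
    case fu: (f u).
      have fv : f v by rewrite -fuv.
      by apply: connect_trans fv; rewrite connC.
    have := L_split iT cT eT (joins_st e) uT; rewrite /f in fu; rewrite fu /= => tu.
    have := L_split iT cT eT (joins_st e) vT; rewrite /f in fuv fu.
    rewrite -fuv fu /= => tv.
    by apply: connect_trans tv; rewrite connC.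
  have hle : (chg f r wT <= cnt e wT)%N.
    apply: (chg_le _ _ _ _ wTW) => Y u v [[sY cY uY vY] _] eY.
    have cuv : connect (adjs (dele T e)) u v.
      apply: conn_mono (gconnE cY uY vY); apply/subsetP => g gY.
      have [_ _ t2] := sbgP sY.
      rewrite !inE (subsetP t2 g gY) andbT; apply: contraNneq eY => <-; exact: gY.
    rewrite /f; apply/idP/idP => h; first exact: connect_trans h cuv.
    by apply: connect_trans h _; rewrite connC.
  have hodd := chg_odd f r wT; rewrite lastT eqxx in hodd.
  move: hpos hle hodd; case: (chg f r wT) => [|[|c]] //= _ h _.
  exact: leq_trans h.
have b2 : \sum_(p <- w1) gl p.1 <= 2 * gl S.
  rewrite sum_glen (glenE S) mulr_sumr; apply: ler_sum => e _.
  rewrite mulrA -natrM; apply: ler_wpM2r; first exact: ltW.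
  rewrite ler_nat.
  case eS: (e \in S.2) => /=.
    by rewrite muln1; apply: leq_trans (w1N e) (wN e).
  by rewrite (cnt0 w1W) ?eS.
have : 2 * gl (wunion r wT) <= 2 * gl S.
  by apply: le_trans b1 (le_trans wTs b2).
by rewrite ler_pM2l.
Qed.

Lemma sd_eq (A : {set V}) : A \subset T.1 -> sd src tgt l T A = sd src tgt l (Gfull V E) A.
Proof.
move=> AT.
have cT0 : cand T A T by apply: candI => //; apply/and3P; split => //; apply: subxx.
have [m [e1 [X hX gX] mle]] := sd_spec _ _ (ex_intro _ T cT0).
have cG0 : cand (Gfull V E) A T by apply: candI => //; exact: sbgT.
have [m' [e2 [S hS gS] mle']] := sd_spec _ _ (ex_intro _ T cG0).
rewrite e1 e2; congr Some; apply/le_anti/andP; split.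
  have [U [hU gU]] := main _ _ AT hS.
  by apply: le_trans (mle U hU) _; rewrite -gS.
rewrite -gX; apply: mle'.
case/candE: hX => sX cX AX; apply: candI => //.
by apply: sbgT; case/sbgP: sX.
Qed.

End Proof.

Theorem theorem1 (V E : finType) (src tgt : E -> V)
  (noloop : forall e : E, src e != tgt e)
  (R : realFieldType) (l : E -> R) (lpos : forall e : E, 0 < l e)
  (T : sgraph V E) (Ttree : is_tree src tgt T) :
  k_geodesic src tgt l 2 T -> fully_geodesic src tgt l T.
Proof.
move=> H2 k A AT _.
case: Ttree => iT [cT acyc].
exact: (@sd_eq V E src tgt R l lpos T iT cT acyc H2 A AT).
Qed.
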